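(* Let $\mathcal{G}=(V,\Sigma,R,S_0)$ be a context-free grammar, $\phi$ a specification, $N$ a natural-language description, and $p_\theta(\cdot\mid\cdot,N)$ a path-conditioned production model as described in the context. Let $\textsc{Infeasible}$ be a predicate on partial programs satisfying: (i) (soundness) if $\textsc{Infeasible}(P,\phi)$ holds, then no completion of $P$ satisfies $\phi$; (ii) (exactness on complete programs) for every complete program $P$, $\textsc{Infeasible}(P,\phi)$ holds if and only if $P\not\models\phi$. Suppose the algorithm $\textsc{OpSynth}$ described in the context (with arbitrary leaf-selection rule and arbitrary tie-breaking in the priority queue) terminates and returns a program $P^*\neq\bot$. Then $P^*$ is a complete program with $P^*\models\phi$, and for every complete program $P$ with $P\models\phi$ we have $p_\theta(P\mid N)\le p_\theta(P^*\mid N)$.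
   Context: Grammar and programs: every production has the form $v\to f(s_1,\dots,s_k)$ with $v\in V$ a nonterminal, $f$ a language construct, and $s_i\in V\cup\Sigma$. A partial program is a finite rooted ordered tree whose nodes are labelled by grammar symbols, the root labelled $S_0$; a node labelled by a nonterminal $v$ is either expanded, meaning it is assigned a production $r=v\to f(s_1,\dots,s_k)$ and has exactly $k$ children labelled $s_1,\dots,s_k$ in order, or unexpanded, in which case it is a leaf. Nodes labelled by terminals are leaves. $\mathcal{C}(P)$ denotes the set of expanded (concrete) nodes, $\mathcal{R}(n)$ the production assigned to $n\in\mathcal{C}(P)$, and $\mathcal{I}(P)$ the set of unexpanded nonterminal leaves (inconcrete nodes). $P$ is complete if $\mathcal{I}(P)=\emptyset$. $\textsc{Expand}(P,l,r)$, for $l\in\mathcal{I}(P)$ labelled $v$ and a production $r$ with left-hand side $v$, assigns $r$ to $l$ and attaches the children given by the right-hand side of $r$. A completion of $P$ is any complete program obtained from $P$ by finitely many $\textsc{Expand}$ operations (a complete $P$ is its own unique completion). AST path: for a node $n$ of $P$, $\pi(P,n)=((n_1,i_1),\dots,(n_k,i_k))$ where $n_1$ is the root, $n_{j+1}$ is the $i_j$-th child of $n_j$, and $n$ is the $i_k$-th child of $n_k$, each $n_j$ recorded together with its assigned production (for the root, $\pi$ is empty). Model: for every nonterminal $v$ and every possible AST path $\pi$ ending at a node labelled $v$, $p_\theta(\cdot\mid\pi,N)$ is a probability distribution on the productions with left-hand side $v$. The score of a partial program is $p_\theta(P\mid N)=\prod_{n\in\mathcal{C}(P)}p_\theta(\mathcal{R}(n)\mid\pi(P,n),N)$,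 and its upper bound is $u_\theta(P\mid N)=p_\theta(P\mid N)\prod_{n\in\mathcal{I}(P)}\max_r p_\theta(r\mid\pi(P,n),N)$. Specification: $\phi$ is a set of examples $\mathcal{E}=\mathcal{E}^+\cup\mathcal{E}^-$ of pairs $(x,y)$; a complete program $P$ satisfies $\phi$ ($P\models\phi$) if $P(x)=y$ for all $(x,y)\in\mathcal{E}^+$ and $P(x)\neq y$ for all $(x,y)\in\mathcal{E}^-$. Algorithm $\textsc{OpSynth}(\mathcal{G},\phi,N,p_\theta)$: initialize a max-priority queue $\mathcal{Q}$ containing the single-node partial program $S_0$ with priority $1$. While $\mathcal{Q}\neq\emptyset$: remove an entry $(P,\rho)$ of maximal priority; if $\textsc{Infeasible}(P,\phi)$, continue to the next iteration; if $P$ is complete, return $P$; otherwise choose some leaf $l\in\mathcal{I}(P)$ (by an arbitrary selection rule) and, for each production $r$ with $p_\theta(r\mid\pi(P,l),N)>0$, insert $P'=\textsc{Expand}(P,l,r)$ into $\mathcal{Q}$ with priority $u_\theta(P'\mid N)$. If the queue becomes empty, return $\bot$. *)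

(* Defs.v *)
From HB Require Import structures.
From mathcomp Require Import all_boot all_order all_algebra.
From mathcomp Require Import reals.
Set Implicit Arguments. Unset Strict Implicit. Unset Printing Implicit Defensive.
Import Order.TTheory GRing.Theory Num.Theory.
Local Open Scope ring_scope.

(* A leaf carries a grammar
   symbol (inl v : nonterminal, unexpanded; inr a : terminal); an expanded
   node carries its assigned production; its label is the lhs of that
   production. *)
Inductive tree (V Sig Prod : Type) : Type :=
| Leaf of (V + Sig)
| Node of Prod & seq (tree V Sig Prod).
Arguments Leaf {V Sig Prod}.
Arguments Node {V Sig Prod}.

(* AST paths: the sequence of (production of ancestor, child index);
   child indices are 0-based. *)
Definition astpath (Prod : Type) := seq (Prod * nat).

Section Grammar.
Variables (V Sig Prod : finType).
Variable lhs : Prod -> V.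
Variable rhs : Prod -> seq (V + Sig).
Variable S0 : V.

Definition label (t : tree V Sig Prod) : V + Sig :=
  match t with Leaf s => s | Node r _ => inl (lhs r) end.

Fixpoint wf (t : tree V Sig Prod) : bool :=
  match t with
  | Leaf _ => true
  | Node r ts =>
      (map label ts == rhs r) &&
      (fix all_wf (ts : seq (tree V Sig Prod)) : bool :=
         match ts with [::] => true | t :: ts' => wf t && all_wf ts' end) ts
  end.

Definition is_partial (t : tree V Sig Prod) : bool :=
  (label t == inl S0) && wf t.

Fixpoint concrete_aux (pi : astpath Prod) (t : tree V Sig Prod)
  : seq (astpath Prod * Prod) :=
  match t with
  | Leaf _ => [::]
  | Node r ts =>
      (pi, r) ::
      (fix go (i : nat) (ts : seq (tree V Sig Prod)) :=
         match ts with
         | [::] => [::]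
         | t :: ts' => concrete_aux (rcons pi (r, i)) t ++ go i.+1 ts'
         end) 0%N ts
  end.
Definition concrete t := concrete_aux [::] t.

(* inconcrete nodes (unexpanded nonterminal leaves), listed with their
   position (sequence of 0-based child indices from the root), their AST
   path and their label *)
Fixpoint inconcrete_aux (pos : seq nat) (pi : astpath Prod)
  (t : tree V Sig Prod) : seq (seq nat * astpath Prod * V) :=
  match t with
  | Leaf (inl v) => [:: (pos, pi, v)]
  | Leaf (inr _) => [::]
  | Node r ts =>
      (fix go (i : nat) (ts : seq (tree V Sig Prod)) :=
         match ts with
         | [::] => [::]
         | t :: ts' => inconcrete_aux (rcons pos i) (rcons pi (r, i)) t
                       ++ go i.+1 ts'
         end) 0%N ts
  end.
Definition inconcrete t := inconcrete_aux [::] [::] t.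

Definition complete (t : tree V Sig Prod) : bool := nilp (inconcrete t).

Fixpoint expand_at (t : tree V Sig Prod) (pos : seq nat) (r : Prod)
  : tree V Sig Prod :=
  match pos, t with
  | [::], Leaf (inl _) => Node r [seq Leaf s | s <- rhs r]
  | i :: pos', Node r' ts =>
      Node r'
        ((fix go (j : nat) (ts : seq (tree V Sig Prod)) :=
            match ts with
            | [::] => [::]
            | t :: ts' => (if j == i then expand_at t pos' r else t)
                          :: go j.+1 ts'
            end) 0%N ts)
  | _, _ => t
  end.

Inductive expands_to : tree V Sig Prod -> tree V Sig Prod -> Prop :=
| expands_refl P : expands_to P P
| expands_step P pos pi v r Q :
    (pos, pi, v) \in inconcrete P -> lhs r = v ->
    expands_to (expand_at P pos r) Q -> expands_to P Q.

Definition completion (P Q : tree V Sig Prod) : Prop :=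
  expands_to P Q /\ complete Q.

Fixpoint path_ok (start : V) (pi : astpath Prod) (v : V) : bool :=
  match pi with
  | [::] => start == v
  | (r, i) :: pi' =>
      (lhs r == start) &&
      match nth None [seq Some x | x <- rhs r] i with
      | Some (inl w) => path_ok w pi' v
      | _ => false
      end
  end.

Section Model.
Variable R : realType.
Variable NL : Type.
Variable N : NL.
Variable p : astpath Prod -> NL -> Prod -> R.

Definition model_ok : Prop :=
  forall pi v, path_ok S0 pi v ->
    (forall r, lhs r = v -> 0 <= p pi N r) /\
    \sum_(r | lhs r == v) p pi N r = 1.

Definition score (t : tree V Sig Prod) : R :=
  \prod_(x <- concrete t) p x.1 N x.2.

Definition maxprob (pi : astpath Prod) (v : V) : R :=
  \big[Num.max/0]_(r | lhs r == v) p pi N r.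

Definition upper (t : tree V Sig Prod) : R :=
  score t * \prod_(x <- inconcrete t) maxprob x.1.2 x.2.

(* The algorithm OpSynth, as a relation between a priority queue (a multiset
   of (partial program, priority) pairs, represented as a list) and a final
   result (None = bottom).  Any entry of maximal priority may be removed
   (arbitrary tie-breaking) and any inconcrete leaf may be chosen. *)
Variable Infeasible : tree V Sig Prod -> Prop.

Definition children (P : tree V Sig Prod) (pos : seq nat)
  (pi : astpath Prod) (v : V) : seq (tree V Sig Prod * R) :=
  [seq (expand_at P pos r, upper (expand_at P pos r))
  | r <- enum Prod & (lhs r == v) && (0 < p pi N r)].

Inductive opsynth_run :
  seq (tree V Sig Prod * R) -> option (tree V Sig Prod) -> Prop :=
| run_empty : opsynth_run [::] None
| run_infeasible Q1 Q2 P rho res :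
    all (fun e => e.2 <= rho) (Q1 ++ Q2) ->
    Infeasible P ->
    opsynth_run (Q1 ++ Q2) res ->
    opsynth_run (Q1 ++ (P, rho) :: Q2) res
| run_return Q1 Q2 P rho :
    all (fun e => e.2 <= rho) (Q1 ++ Q2) ->
    ~ Infeasible P ->
    complete P ->
    opsynth_run (Q1 ++ (P, rho) :: Q2) (Some P)
| run_expand Q1 Q2 P rho pos pi v res :
    all (fun e => e.2 <= rho) (Q1 ++ Q2) ->
    ~ Infeasible P ->
    ~~ complete P ->
    (pos, pi, v) \in inconcrete P ->
    opsynth_run (Q1 ++ Q2 ++ children P pos pi v) res ->
    opsynth_run (Q1 ++ (P, rho) :: Q2) res.

End Model.

Definition satisfies (X Y : eqType) (eval : tree V Sig Prod -> X -> Y)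
  (Epos Eneg : seq (X * Y)) (P : tree V Sig Prod) : Prop :=
  (forall e, e \in Epos -> eval P e.1 = e.2) /\
  (forall e, e \in Eneg -> eval P e.1 <> e.2).

End Grammar.

(* Main.v *)
Require Import Defs.
From HB Require Import structures.
From mathcomp Require Import all_boot all_order all_algebra.
From mathcomp Require Import reals.
From Stdlib Require Import Classical.
Import Order.TTheory GRing.Theory Num.Theory.
Set Implicit Arguments. Unset Strict Implicit. Unset Printing Implicit Defensive.

Lemma catI (A : Type) (s a b : seq A) : s ++ a = s ++ b -> a = b.
Proof. by elim: s => //= x s IH [] /IH. Qed.

Section Trees.
Variables (V Sig Prod : finType).
Variable lhs : Prod -> V.
Variable rhs : Prod -> seq (V + Sig).
Variable S0 : V.

Notation T := (tree V Sig Prod).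
Notation label := (label lhs).
Notation wf := (wf lhs rhs).

Fixpoint allT (P : T -> Prop) (ts : seq T) : Prop :=
  match ts with [::] => True | t :: ts' => P t /\ allT P ts' end.

Definition tree_ind' (P : T -> Prop) (HL : forall s, P (Leaf s))
  (HN : forall r ts, allT P ts -> P (Node r ts)) : forall t, P t :=
  fix F t := match t return P t with
  | Leaf s => HL s
  | Node r ts => HN r ts ((fix G ts := match ts return allT P ts with
                     | [::] => I | t :: ts' => conj (F t) (G ts') end) ts)
  end.

Lemma wf_node r ts : wf (Node r ts) = (map label ts == rhs r) && all wf ts.
Proof. rewrite /=; congr (_ && _); by elim: ts => //= t ts ->. Qed.

Fixpoint cgo (pi : astpath Prod) r i (ts : seq T) :=
  match ts with [::] => [::]
  | t :: ts' => concrete_aux (rcons pi (r, i)) t ++ cgo pi r i.+1 ts' end.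

Lemma conc_node pi r ts : concrete_aux pi (Node r ts) = (pi, r) :: cgo pi r 0 ts.
Proof. rewrite /=; congr (_ :: _); move: 0%N; by elim: ts => //= t ts IH i; rewrite IH. Qed.

Fixpoint igo (pos : seq nat) (pi : astpath Prod) r i (ts : seq T) :=
  match ts with [::] => [::]
  | t :: ts' => inconcrete_aux (rcons pos i) (rcons pi (r, i)) t ++ igo pos pi r i.+1 ts' end.

Lemma inc_node pos pi r ts : inconcrete_aux pos pi (Node r ts) = igo pos pi r 0 ts.
Proof. rewrite /=; move: 0%N; by elim: ts => //= t ts IH i; rewrite IH. Qed.

Fixpoint ego k (rel : seq nat) r i (ts : seq T) :=
  match ts with [::] => [::]
  | t :: ts' => (if i == k then expand_at rhs t rel r else t) :: ego k rel r i.+1 ts' end.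

Lemma exp_node r' ts k rel r :
  expand_at rhs (Node r' ts) (k :: rel) r = Node r' (ego k rel r 0 ts).
Proof. rewrite /=; congr Node; move: 0%N; by elim: ts => //= t ts IH i; rewrite IH. Qed.

Lemma ego_lt k rel r i (ts : seq T) : (k < i)%N -> ego k rel r i ts = ts.
Proof.
elim: ts i => //= t ts IH i ki; rewrite IH; last by apply: ltn_trans ki _.
by rewrite (gtn_eqF ki).
Qed.

Fixpoint cnt (t : T) : nat :=
  match t with Leaf _ => 0%N
  | Node _ ts => ((fix go ts := match ts with [::] => 0%N | t :: ts => (cnt t + go ts)%N end) ts).+1 end.

Fixpoint cntl (ts : seq T) : nat := match ts with [::] => 0%N | t :: ts => (cnt t + cntl ts)%N end.
Lemma cnt_node r ts : cnt (Node r ts) = (cntl ts).+1.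
Proof. rewrite /=; congr S; by elim: ts => //= t ts ->. Qed.

Fixpoint prefix (q t : T) : bool :=
  match q, t with
  | Leaf (inl v), _ => label t == inl v
  | Leaf (inr a), Leaf (inr b) => a == b
  | Node r qs, Node r' ts => (r == r') &&
      (fix go qs ts := match qs, ts with
        | [::], [::] => true
        | q :: qs', t :: ts' => prefix q t && go qs' ts'
        | _, _ => false end) qs ts
  | _, _ => false
  end.

Fixpoint pgo (qs ts : seq T) : bool :=
  match qs, ts with
  | [::], [::] => true
  | q :: qs', t :: ts' => prefix q t && pgo qs' ts'
  | _, _ => false end.

Lemma prefix_node r qs r' ts : prefix (Node r qs) (Node r' ts) = (r == r') && pgo qs ts.
Proof. rewrite /=; congr (_ && _); by elim: qs ts => [|q qs IH] [|t ts] //=; rewrite IH. Qed.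

Lemma prefix_wf q t : prefix q t -> wf t -> wf q && (label q == label t).
Proof.
elim/tree_ind': q t => [[v|a] t|r qs IH [s|r' ts]] //.
- by move=> /= /eqP ->.
- by case: t => [[v|b]|] //= /eqP ->.
rewrite prefix_node wf_node => /andP[/eqP <- hp] /andP[/eqP hl hw].
rewrite wf_node eqxx andbT -hl; clear hl.
elim: qs ts IH hp hw => [|q qs IHl] [|t ts] //= [IHq IHqs] /andP[hq hqs] /andP[wt wts].
have /andP[-> /eqP ->] := IHq _ hq wt.
have /andP[/eqP -> ->] := IHl _ IHqs hqs wts.
by rewrite eqxx.
Qed.

Lemma prefix_complete q t pos pi :
  inconcrete_aux pos pi q = [::] -> prefix q t -> q = t.
Proof.
elim/tree_ind': q t pos pi => [[v|a] t|r qs IH [s|r' ts]] pos pi //.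
- by case: t => [[v|b]|] //= _ /eqP ->.
rewrite inc_node prefix_node => + /andP[/eqP <- hp].
move=> hi; congr Node; move: 0%N hi => i.
elim: qs ts i IH hp => [|q qs IHl] [|t ts] //= i [IHq IHqs] /andP[hq hqs].
move=> /(f_equal size); rewrite size_cat => /eqP; rewrite addn_eq0.
move=> /andP[/eqP/size0nil h1 /eqP/size0nil h2].
by rewrite (IHq _ _ _ h1 hq) (IHl _ _ IHqs hqs h2).
Qed.

Lemma posI (t : T) pos pi x : x \in inconcrete_aux pos pi t -> exists rel, x.1.1 = pos ++ rel.
Proof.
elim/tree_ind': t pos pi => [[v|a]|r ts IH] pos pi //=.
  by rewrite inE => /eqP ->; exists [::]; rewrite cats0.
rewrite -/(inconcrete_aux pos pi (Node r ts)) inc_node; move: 0%N => i.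
elim: ts i IH => [|t ts IHl] //= i [IHt IHts]; rewrite mem_cat => /orP[/IHt [rel ->]|/IHl]; last by apply.
by exists (i :: rel); rewrite cat_rcons.
Qed.

Lemma posIgo (ts : seq T) pos pi r i x : x \in igo pos pi r i ts ->
  exists j rel, (i <= j)%N /\ x.1.1 = pos ++ j :: rel.
Proof.
elim: ts i => [|t ts IHl] //= i; rewrite mem_cat => /orP[/posI [rel ->]|/IHl [j [rel [hj ->]]]].
  by exists i, rel; rewrite cat_rcons.
by exists j, rel; split => //; apply: ltnW.
Qed.

Lemma expand_ok (q : T) pos0 pi0 rel pi v r :
  (pos0 ++ rel, pi, v) \in inconcrete_aux pos0 pi0 q -> lhs r = v -> wf q ->
  [/\ wf (expand_at rhs q rel r), label (expand_at rhs q rel r) = label q &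
      cnt (expand_at rhs q rel r) = (cnt q).+1].
Proof.
elim/tree_ind': q pos0 pi0 rel => [[w|a]|r' qs IH] pos0 pi0 rel.
- rewrite /= inE => /eqP [] /(f_equal size); rewrite size_cat => hs _ -> hv _.
  have -> : rel = [::] by case: rel hs => //= ? ? /eqP; rewrite -{2}[size pos0]addn0 eqn_add2l.
  split; [|by rewrite /= hv|by rewrite /=; elim: (rhs r) => //= s l <-].
  rewrite /= -map_comp /=; apply/andP; split; first by rewrite map_id.
  by elim: (rhs r).
- by [].
rewrite inc_node => hin hv.
rewrite wf_node => /andP[/eqP hl hw].
have [j [rel' [_ hrel]]] := posIgo hin; rewrite /= in hrel; have ? := catI hrel; subst rel.
rewrite exp_node wf_node !cnt_node.
suff: [/\ all wf (ego j rel' r 0 qs), map label (ego j rel' r 0 qs) = map label qs &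
   cntl (ego j rel' r 0 qs) = (cntl qs).+1] by case=> -> -> ->; rewrite hl eqxx.
move: 0%N hin hw => i.
elim: qs i IH {hl} => [|q qs IHl] //= i [IHq IHqs]; rewrite mem_cat => /orP[hq|hqs] /andP[wq wqs].
- have [rel'' /= hr] := posI hq; move: hr; rewrite cat_rcons => /catI [ej er]; subst j rel''.
  rewrite eqxx ego_lt //.
  have [] := IHq (rcons pos0 i) (rcons pi0 (r', i)) rel' _ _ wq; first by rewrite cat_rcons.
    by [].
  by move=> -> -> ->; rewrite wqs.
- have [j' [rel'' [hj /= hr]]] := posIgo hqs; move: hr => /catI [ej er]; subst j' rel''.
  rewrite (ltn_eqF hj).
  by case: (IHl _ IHqs hqs wqs) => -> -> ->; rewrite wq addnS.
Qed.

Lemma prefix_leaf (t : T) : prefix (Leaf (label t)) t.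
Proof. by case: t => [[v|a]|r ts] /=. Qed.

Lemma pgo_leaf (ts : seq T) : pgo [seq Leaf s | s <- map label ts] ts.
Proof. by elim: ts => //= t ts ->; rewrite andbT; exact: prefix_leaf. Qed.

Lemma prefix_expand (q t : T) pos0 pi0 rel pi v :
  (pos0 ++ rel, pi, v) \in inconcrete_aux pos0 pi0 q -> prefix q t -> wf t ->
  inconcrete_aux pos0 pi0 t = [::] ->
  exists r, [/\ lhs r = v, (pi, r) \in concrete_aux pi0 t &
                prefix (expand_at rhs q rel r) t].
Proof.
elim/tree_ind': q t pos0 pi0 rel => [[w|a] t|r' qs IH [s|r'' ts]] pos0 pi0 rel.
- rewrite /= inE => /eqP [] /(f_equal size); rewrite size_cat => hs -> ->.
  have -> : rel = [::] by case: rel hs => //= ? ? /eqP; rewrite -{2}[size pos0]addn0 eqn_add2l.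
  case: t => [[w'|b]|r ts] //; move=> /eqP hlr hw _.
  have <- : lhs r = w by case: hlr.
  exists r; split => //; first by rewrite conc_node mem_head.
  rewrite prefix_node eqxx /=; move: hw => /andP[/eqP <- _]; exact: pgo_leaf.
- by [].
- by [].
rewrite inc_node prefix_node wf_node inc_node => hin /andP[/eqP <- hp] /andP[/eqP hl hw] hi.
have [j [rel' [_ hrel]]] := posIgo hin; rewrite /= in hrel; have ? := catI hrel; subst rel.
suff [r [hv hr hpr]] : exists r, [/\ lhs r = v, (pi, r) \in cgo pi0 r' 0 ts & pgo (ego j rel' r 0 qs) ts].
  exists r; split => //; first by rewrite conc_node inE hr orbT.
  by rewrite exp_node prefix_node eqxx.
clear hl; move: 0%N hin hi => i.
elim: qs ts i IH hp hw => [|q qs IHl] [|t ts] //= i [IHq IHqs] /andP[hq hqs] /andP[wt wts].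
move=> + /(f_equal size); rewrite size_cat => + /eqP; rewrite addn_eq0.
move=> + /andP[/eqP/size0nil h1 /eqP/size0nil h2].
rewrite mem_cat => /orP[hq'|hqs'].
- have [rel'' /= hr] := posI hq'; move: hr; rewrite cat_rcons => /catI [ej er]; subst j rel''.
  have [] := IHq t (rcons pos0 i) (rcons pi0 (r', i)) rel' _ hq wt h1; first by rewrite cat_rcons.
  move=> r [hv hr hpr]; exists r; split => //; first by rewrite mem_cat hr.
  by rewrite eqxx ego_lt // hpr.
- have [j' [rel'' [hj /= hr]]] := posIgo hqs'; move: hr => /catI [ej er]; subst j' rel''.
  have [r [hv hr hpr]] := IHl _ _ IHqs hqs wts hqs' h2.
  exists r; split => //; first by rewrite mem_cat hr orbT.
  by rewrite (ltn_eqF hj) hq hpr.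
Qed.

Lemma prefix_cnt (q t : T) : prefix q t -> (cnt q <= cnt t)%N.
Proof.
elim/tree_ind': q t => [s t|r qs IH [s|r' ts]] //.
rewrite prefix_node !cnt_node => /andP[_ hp]; rewrite ltnS.
elim: qs ts IH hp => [|q qs IHl] [|t ts] //= [IHq IHqs] /andP[hq hqs].
by apply: leq_add; [apply: IHq | apply: IHl].
Qed.

Lemma prefix_expands n (q t : T) : (cnt t - cnt q <= n)%N -> prefix q t -> wf t ->
  inconcrete t = [::] -> expands_to lhs rhs q t.
Proof.
elim: n q => [|n IHn] q hn hp hw hi; case E: (inconcrete q) => [|[[pos pi] v] xs];
  try by rewrite (prefix_complete E hp); constructor.
- have hx : ([::] ++ pos, pi, v) \in inconcrete_aux [::] [::] q by rewrite -/(inconcrete q) E mem_head.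
  have [r [hv _ hpr]] := prefix_expand hx hp hw hi.
  have [_ _ hc] := expand_ok hx hv (proj1 (andP (prefix_wf hp hw))).
  have := prefix_cnt hpr; rewrite hc => h.
  by move: hn; rewrite leqn0 subn_eq0 => /(leq_trans h); rewrite ltnn.
- have hx : ([::] ++ pos, pi, v) \in inconcrete_aux [::] [::] q by rewrite -/(inconcrete q) E mem_head.
  have [r [hv _ hpr]] := prefix_expand hx hp hw hi.
  have [_ _ hc] := expand_ok hx hv (proj1 (andP (prefix_wf hp hw))).
  apply: (@expands_step _ _ _ lhs rhs q pos pi v r); [exact: hx | exact: hv |].
  by apply: IHn => //; rewrite hc subnS -subn1 leq_subLR add1n.
Qed.


Lemma path_ok_rcons (pi : astpath Prod) s w r i w' :
  path_ok lhs rhs s pi w -> lhs r = w ->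
  nth None [seq Some x | x <- rhs r] i = Some (inl w') ->
  path_ok lhs rhs s (rcons pi (r, i)) w'.
Proof.
elim: pi s => [|[r0 i0] pi IH] s /=.
  by move=> /eqP -> <- ->; rewrite /= !eqxx.
case/andP=> h1; case: (nth None _ i0) => [[w0|a]|] // h2 hr hn.
by rewrite h1 /=; apply: IH.
Qed.

Definition valid pi (t : T) :=
  wf t /\ (forall w, label t = inl w -> path_ok lhs rhs S0 pi w).

Fixpoint validl pi r i (ts : seq T) : Prop :=
  match ts with [::] => True
  | t :: ts' => valid (rcons pi (r, i)) t /\ validl pi r i.+1 ts' end.

Lemma valid_children pi r ts : valid pi (Node r ts) -> validl pi r 0 ts.
Proof.
case; rewrite wf_node => /andP[/eqP hl hw] hp.
have hpr : path_ok lhs rhs S0 pi (lhs r) := hp _ erefl.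
suff: forall i, (forall k, nth None [seq Some x | x <- rhs r] (i + k) =
   nth None [seq Some (label x) | x <- ts] k) -> validl pi r i ts.
  by apply => k; rewrite add0n -hl -map_comp.
clear hp; elim: ts hw {hl} => //= t ts IH /andP[wt wts] i hn; split.
- split => // w hw'; apply: path_ok_rcons hpr erefl _.
  by rewrite -[i]addn0 hn /= hw'.
- by apply: IH => // k; rewrite addSnnS hn.
Qed.

Lemma VP (t : T) pi pos : valid pi t ->
  (forall x, x \in concrete_aux pi t -> path_ok lhs rhs S0 x.1 (lhs x.2)) /\
  (forall x, x \in inconcrete_aux pos pi t -> path_ok lhs rhs S0 x.1.2 x.2).
Proof.
elim/tree_ind': t pi pos => [[v|a]|r ts IH] pi pos hv.
- split => x //=; rewrite inE => /eqP -> /=; exact: (proj2 hv) _ erefl.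
- by split.
have hc := valid_children hv.
have hpr : path_ok lhs rhs S0 pi (lhs r) := (proj2 hv) _ erefl.
rewrite conc_node inc_node.
suff [h1 h2] : (forall x, x \in cgo pi r 0 ts -> path_ok lhs rhs S0 x.1 (lhs x.2)) /\
  (forall x, x \in igo pos pi r 0 ts -> path_ok lhs rhs S0 x.1.2 x.2).
  by split => // x; rewrite ?inE => // /orP[/eqP -> //|]; apply: h1.
move: 0%N hc => i.
elim: ts i IH {hv} => //= t ts IHl i [IHt IHts] [vt vts].
have [c1 i1] := IHt _ (rcons pos i) vt; have [c2 i2] := IHl _ IHts vts.
by split => x; rewrite mem_cat => /orP[]; auto.
Qed.

Variables (R : realType) (NL : Type) (N : NL) (p : astpath Prod -> NL -> Prod -> R).
Hypothesis hmodel : model_ok lhs rhs S0 N p.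
Local Open Scope ring_scope.
Notation mp := (maxprob lhs N p).

Lemma p01 pi v r : path_ok lhs rhs S0 pi v -> lhs r = v -> 0 <= p pi N r <= 1.
Proof.
move=> hpi hr; have [h0 h1] := hmodel hpi.
apply/andP; split; first by apply: h0.
rewrite -h1 (bigD1 r) /=; last by rewrite hr.
rewrite lerDl; apply: sumr_ge0 => r' /andP[/eqP ? _]; exact: h0.
Qed.

Lemma mp01 pi v : path_ok lhs rhs S0 pi v -> 0 <= mp pi v <= 1.
Proof.
move=> hpi; rewrite /maxprob; apply/andP; split.
- apply: (big_ind (fun x => 0 <= x)) => // [x y hx hy|r /eqP hr].
    by rewrite le_max hx.
  exact: (andP (p01 hpi hr)).1.
- apply: (big_ind (fun x => x <= 1)) => // [x y hx hy|r /eqP hr].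
    by rewrite ge_max hx hy.
  exact: (andP (p01 hpi hr)).2.
Qed.

Lemma le_mp pi v r : lhs r = v -> p pi N r <= mp pi v.
Proof. by move=> hr; rewrite /maxprob (bigD1 r) ?hr ?eqxx //= le_max lexx. Qed.

Lemma prod01 (A : eqType) (s : seq A) (f : A -> R) :
  (forall x, x \in s -> 0 <= f x <= 1) -> 0 <= \prod_(x <- s) f x <= 1.
Proof.
elim: s => [|y s IH] h; first by rewrite big_nil ler01 lexx.
rewrite big_cons; have /andP[a b] := h y (mem_head _ _).
have /andP[c d] := IH (fun x hx => h x (@mem_behead _ (y :: s) x hx)).
by apply/andP; split; [apply: mulr_ge0 | apply: mulr_ile1].
Qed.

Lemma prod_pos_mem (A : eqType) (s : seq A) (f : A -> R) x :
  (forall y, y \in s -> 0 <= f y) -> 0 < \prod_(y <- s) f y -> x \in s -> 0 < f x.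
Proof.
move=> h0 hp hx; rewrite lt_def (h0 _ hx) andbT; apply/eqP => e.
by move: hp; rewrite (big_rem x hx) /= e mul0r ltxx.
Qed.

Definition Fv pos pi (t : T) :=
  (\prod_(x <- concrete_aux pi t) p x.1 N x.2) *
  \prod_(x <- inconcrete_aux pos pi t) mp x.1.2 x.2.

Lemma prodC01 pi (t : T) : valid pi t -> 0 <= \prod_(x <- concrete_aux pi t) p x.1 N x.2 <= 1.
Proof.
move=> hv; have [h1 _] := VP [::] hv.
by apply: prod01 => x /h1 hx; apply: p01 hx erefl.
Qed.

Lemma F01 pos pi (t : T) : valid pi t -> 0 <= Fv pos pi t <= 1.
Proof.
move=> hv; have [h1 h2] := VP pos hv.
have /andP[a b] := prodC01 hv.
have /andP[c d] : 0 <= \prod_(x <- inconcrete_aux pos pi t) mp x.1.2 x.2 <= 1.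
  by apply: prod01 => x /h2 hx; apply: mp01.
by apply/andP; split; [apply: mulr_ge0 | apply: mulr_ile1].
Qed.

Fixpoint Fgo pos pi r i (ts : seq T) : R :=
  match ts with [::] => 1
  | t :: ts' => Fv (rcons pos i) (rcons pi (r, i)) t * Fgo pos pi r i.+1 ts' end.

Lemma F_node pos pi r ts : Fv pos pi (Node r ts) = p pi N r * Fgo pos pi r 0 ts.
Proof.
rewrite /Fv conc_node inc_node big_cons -mulrA; congr (_ * _); move: 0%N.
elim: ts => [|t ts IH] i /=; first by rewrite !big_nil mulr1.
by rewrite !big_cat /= -IH /Fv mulrACA.
Qed.

Lemma F_leaf pos pi v : Fv pos pi (Leaf (inl v)) = mp pi v.
Proof. by rewrite /Fv /= big_nil big_seq1 mul1r. Qed.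

Lemma Fgo01 pos pi r i ts : validl pi r i ts -> 0 <= Fgo pos pi r i ts <= 1.
Proof.
elim: ts i => [|t ts IH] i /=; first by rewrite ler01 lexx.
case=> vt vts; have /andP[a b] := F01 (rcons pos i) vt; have /andP[c d] := IH _ vts.
by apply/andP; split; [apply: mulr_ge0 | apply: mulr_ile1].
Qed.

Lemma prefix_F (q t : T) pos pi : prefix q t -> valid pi t -> Fv pos pi t <= Fv pos pi q.
Proof.
elim/tree_ind': q t pos pi => [[v|a] t|r qs IH [s|r' ts]] pos pi //.
- move=> /= /eqP hl hv; rewrite F_leaf.
  case: t hl hv => [[w|b]|r ts] //=.
    by case=> -> _; rewrite F_leaf.
  case=> hr hv; rewrite F_node.
  have hpr : path_ok lhs rhs S0 pi (lhs r) := (proj2 hv) _ erefl.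
  have /andP[h0 _] := p01 hpr erefl.
  have /andP[_ h1] := Fgo01 pos (valid_children hv).
  apply: le_trans (ler_wpM2l h0 h1) _; rewrite mulr1; exact: le_mp.
- by case: t => [[w|b]|] //= /eqP -> _.
rewrite prefix_node => /andP[/eqP <- hp] hv; rewrite !F_node.
have hpr : path_ok lhs rhs S0 pi (lhs r) := (proj2 hv) _ erefl.
have /andP[h0 _] := p01 hpr erefl.
apply: (ler_wpM2l h0); move: 0%N (valid_children hv) => i.
elim: qs ts i IH hp {hv} => [|q qs IHl] [|t ts] //= i [IHq IHqs] /andP[hq hqs] [vt vts].
have /andP[a _] := F01 (rcons pos i) vt; have /andP[c _] := Fgo01 pos vts.
by apply: ler_pM => //; [apply: IHq | apply: IHl].
Qed.

Variables (X Y : eqType) (eval : T -> X -> Y) (Epos Eneg : seq (X * Y))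
  (Infeasible : T -> Prop).
Hypothesis hsound : forall P, is_partial lhs rhs S0 P -> Infeasible P ->
  forall Q, completion lhs rhs P Q -> ~ satisfies eval Epos Eneg Q.

Lemma partial_valid (P : T) : is_partial lhs rhs S0 P -> valid [::] P.
Proof. by case/andP => /eqP hl hw; split => // w; rewrite hl => -[<-] /=. Qed.

Lemma score_F (P : T) : complete P -> Fv [::] [::] P = score N p P.
Proof. by move=> /nilP hc; rewrite /Fv -/(inconcrete P) hc big_nil mulr1. Qed.

Lemma score01 (P : T) : is_partial lhs rhs S0 P -> 0 <= score N p P <= 1.
Proof. by move=> /partial_valid; apply: prodC01. Qed.

Definition inv (e : T * R) :=
  is_partial lhs rhs S0 e.1 && (complete e.1 ==> (e.2 == score N p e.1)).

Lemma has_all_le (s : seq (T * R)) P x rho :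
  has (fun e => prefix e.1 P && (x <= e.2)) s -> all (fun e => e.2 <= rho) s -> x <= rho.
Proof.
elim: s => //= e s IH /orP[/andP[_ h]|h] /andP[h1 h2]; [exact: le_trans h h1 | exact: IH].
Qed.

Lemma all_children (P0 : T) pos pi v : is_partial lhs rhs S0 P0 ->
  (pos, pi, v) \in inconcrete P0 -> all inv (children lhs rhs N p P0 pos pi v).
Proof.
move=> /andP[/eqP hl hw] hx; rewrite /children all_map; apply/allP => r.
rewrite mem_filter => /andP[/andP[/eqP hv _] _].
have hx' : ([::] ++ pos, pi, v) \in inconcrete_aux [::] [::] P0 by [].
have [w' l' _] := expand_ok hx' hv hw.
rewrite /inv /is_partial /= w' l' hl eqxx /=; apply/implyP => /nilP hc.
by rewrite /upper hc big_nil mulr1.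
Qed.

Lemma run_main q res : opsynth_run lhs rhs N p Infeasible q res ->
  forall Ps, res = Some Ps -> all inv q ->
  [/\ is_partial lhs rhs S0 Ps, complete Ps, ~ Infeasible Ps &
   forall P, is_partial lhs rhs S0 P -> complete P -> satisfies eval Epos Eneg P ->
     0 < score N p P ->
     has (fun e => prefix e.1 P && (score N p P <= e.2)) q -> score N p P <= score N p Ps].
Proof.
elim => {q res} [|Q1 Q2 P0 rho res hall hinf hrun IH|Q1 Q2 P0 rho hall hinf hc|
  Q1 Q2 P0 rho pos pi v res hall hinf hnc hmem hrun IH] Ps //.
- move=> hres; rewrite all_cat /= => /and3P[h1 h0 h2]; move: h0; rewrite /inv /= => /andP[h0 _].
  have := IH Ps hres; rewrite all_cat h1 h2 => /(_ isT) [hp hcp hn hopt].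
  split => // P pP cP sP sc; rewrite has_cat /= => /or3P[w1|w0|w2].
  + by apply: hopt => //; rewrite has_cat w1.
  + exfalso; case/andP: w0 => hpre _.
    apply: (hsound h0 hinf (Q:=P)) sP; split => //.
    apply: (prefix_expands (n := (cnt P - cnt P0)%N)) => //; [by case/andP: pP | exact/nilP].
  + by apply: hopt => //; rewrite has_cat w2 orbT.
- case=> <-; rewrite all_cat /= => /and3P[h1 h0 h2]; move: h0; rewrite /inv /=.
  move=> /andP[hpart /implyP/(_ hc)/eqP hrho].
  split => // P pP cP sP sc; rewrite has_cat /= => /or3P[w1|/andP[hpre _]|w2].
  + rewrite -hrho; apply: has_all_le w1 _; by move: hall; rewrite all_cat => /andP[].
  + by rewrite (prefix_complete (pos:=[::]) (pi:=[::]) (elimT nilP hc) hpre) lexx.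
  + rewrite -hrho; apply: has_all_le w2 _; by move: hall; rewrite all_cat => /andP[].
- move=> hres; rewrite all_cat /= => /and3P[h1 h0 h2]; move: h0; rewrite /inv /= => /andP[hpart _].
  have := IH Ps hres; rewrite !all_cat h1 h2 all_children // => /(_ isT) [hp hcp hn hopt].
  split => // P pP cP sP sc; rewrite has_cat /= => /or3P[w1|/andP[hpre hle]|w2].
  + by apply: hopt => //; rewrite has_cat w1.
  + apply: hopt => //; rewrite !has_cat; apply/orP; right; apply/orP; right.
    have hx : ([::] ++ pos, pi, v) \in inconcrete_aux [::] [::] P0 by [].
    have wP : wf P by case/andP: pP.
    have [r [hv hr hpr]] := prefix_expand hx hpre wP (elimT nilP cP).
    have vP := partial_valid pP.
    have hpos : 0 < p pi N r.
      have [c1 _] := VP [::] vP.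
      apply: (prod_pos_mem (f := fun x => p x.1 N x.2) _ sc hr).
      by move=> y hy; exact: (andP (p01 (c1 y hy) erefl)).1.
    rewrite /children has_map; apply/hasP; exists r; first by rewrite mem_filter mem_enum hv eqxx hpos.
    rewrite /= hpr /=.
    change (score N p P <= Fv [::] [::] (expand_at rhs P0 pos r)).
    by rewrite -(score_F cP); apply: prefix_F hpr vP.
  + by apply: hopt => //; rewrite !has_cat w2 orbT.
Qed.

End Trees.

Local Open Scope ring_scope.

Theorem mainTheorem1
  (V Sig Prod : finType) (lhs : Prod -> V) (rhs : Prod -> seq (V + Sig))
  (S0 : V)
  (X Y : eqType) (eval : tree V Sig Prod -> X -> Y) (Epos Eneg : seq (X * Y))
  (R : realType) (NL : Type) (N : NL) (p : astpath Prod -> NL -> Prod -> R)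
  (Infeasible : tree V Sig Prod -> Prop)
  (Pstar : tree V Sig Prod) :
  model_ok lhs rhs S0 N p ->
  (forall P, is_partial lhs rhs S0 P -> Infeasible P ->
     forall Q, completion lhs rhs P Q -> ~ satisfies eval Epos Eneg Q) ->
  (forall P, is_partial lhs rhs S0 P -> complete P ->
     (Infeasible P <-> ~ satisfies eval Epos Eneg P)) ->
  opsynth_run lhs rhs N p Infeasible [:: (Leaf (inl S0), 1)] (Some Pstar) ->
  [/\ is_partial lhs rhs S0 Pstar, complete Pstar,
      satisfies eval Epos Eneg Pstar &
      forall P, is_partial lhs rhs S0 P -> complete P ->
        satisfies eval Epos Eneg P -> score N p P <= score N p Pstar].
Proof.
move=> hmodel hsound hexact hrun.
have H := run_main hmodel hsound hrun (erefl (Some Pstar)).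
have [hp hc hn hopt] := H ltac:(by rewrite /= /inv /is_partial /= eqxx).
split => //.
- apply: NNPP => hns; apply: hn; exact: (proj2 (hexact _ hp hc)) hns.
- move=> P pP cP sP.
  case: (ltrP 0 (score N p P)) => h.
  + apply: hopt => //=; rewrite orbF; apply/andP; split; first by case/andP: pP.
    exact: (andP (score01 hmodel pP)).2.
  + apply: le_trans h _; exact: (andP (score01 hmodel hp)).1.
Qed.
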